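(* Consider the classical four-stage fourth-order Runge--Kutta method, with $a_{21}=\frac12$, $a_{32}=\frac12$, $a_{43}=1$, all other $a_{ij}=0$, and $b=(\frac16,\frac13,\frac13,\frac16)$. There is no $\gamma>0$ such that this method preserves positivity for all problems of the form $$u_k'(t)=q_k(u(t),t)\,\frac{u_{k-1}(t)-u_k(t)}{\Delta x},\quad k=1,\dots,N,\qquad u_0:=u_N,\qquad u_k(t_0)=u_k^0\ge0,$$ with nonnegative $q_k$, under the step-size restriction $0\le\Delta t\,q_k(u,t)/\Delta x\le\gamma$ for all $k,u,t$; that is, for every $\gamma>0$ there is such a problem and such a step size for which the method yields a negative solution value.
   Context: Applying an explicit Runge--Kutta method with strictly lower-triangular $A=(a_{ij})$, weights $b$ and nodes $c_i=\sum_ja_{ij}$ to this system with step $\Delta t$ means: $y^i_k=u^n_k+\sum_{j<i}a_{ij}\xi^j_k(y^j_{k-1}-y^j_k)$, $u^{n+1}_k=u^n_k+\sum_ib_i\xi^i_k(y^i_{k-1}-y^i_k)$, with $\xi^j_k=\frac{\Delta t}{\Delta x}q_k(y^j,t_n+c_j\Delta t)$ and periodic indices ($y_0:=y_N$). *)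

(* Defs.v *)
From mathcomp Require Import all_boot all_order all_algebra.
From mathcomp Require Import reals.
Set Implicit Arguments. Unset Strict Implicit. Unset Printing Implicit Defensive.
Import Order.TTheory GRing.Theory Num.Theory.
Local Open Scope ring_scope.

Section RK.
Variable R : realType.
Variable N : nat.
(* Grid indices: ordinal k : 'I_N.+1 stands for the paper's index k+1,
   so the paper's N grid points are 'I_N.+1 (i.e. the paper's N is N.+1 here). *)
Definition state := 'I_N.+1 -> R.

(* periodic predecessor: paper's u_{k-1} with u_0 := u_N *)
Definition prevI (k : 'I_N.+1) : 'I_N.+1 := inord ((k + N) %% N.+1)%N.

Definition incr (q : 'I_N.+1 -> state -> R -> R) (dt dx : R) (y : state) (t : R)
  : state := fun k => dt / dx * q k y t * (y (prevI k) - y k).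

(* explicit RK method with tableau A (strictly lower triangular, 0-based
   stage indices), weights b, s stages *)
Variables (A : nat -> nat -> R) (b : nat -> R) (s : nat).
Definition node (j : nat) : R := \sum_(l < j) A j l.

Fixpoint stages (q : 'I_N.+1 -> state -> R -> R) (dt dx tn : R) (u : state)
  (i : nat) : seq state :=
  match i with
  | 0 => [::]
  | i'.+1 =>
      let ys := stages q dt dx tn u i' in
      rcons ys (fun k => u k + \sum_(j < i') A i' j *
                 incr q dt dx (nth u ys j) (tn + node j * dt) k)
  end.

Definition rk_step q dt dx tn (u : state) : state :=
  let ys := stages q dt dx tn u s in
  fun k => u k + \sum_(j < s) b j * incr q dt dx (nth u ys j) (tn + node j * dt) k.

Fixpoint rk_sol q dt dx t0 (u0 : state) (n : nat) : state :=
  match n with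
  | 0 => u0
  | n'.+1 => rk_step q dt dx (t0 + n'%:R * dt) (rk_sol q dt dx t0 u0 n')
  end.
End RK.

Definition rk4A (R : realType) (i j : nat) : R :=
  match i, j with
  | 1, 0 => 1 / 2
  | 2, 1 => 1 / 2
  | 3, 2 => 1
  | _, _ => 0
  end.
Definition rk4b (R : realType) (j : nat) : R :=
  match j with
  | 0 => 1 / 6
  | 1 => 1 / 3
  | 2 => 1 / 3
  | 3 => 1 / 6
  | _ => 0
  end.

(* Main.v *)
Require Import Defs.
From mathcomp Require Import all_boot all_order all_algebra.
From mathcomp Require Import reals.
From Stdlib Require Import FunctionalExtensionality.
From mathcomp Require Import ring lra.
Import Order.TTheory GRing.Theory Num.Theory.
Local Open Scope ring_scope.

Section S.
Variables (R : realType) (g : R).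

Lemma nodes :
  [/\ node (@rk4A R) 0 = 0, node (@rk4A R) 1 = 1/2, node (@rk4A R) 2 = 1/2 & node (@rk4A R) 3 = 1].
Proof.
rewrite /node !big_ord_recr !big_ord0 /=.
split; rewrite /rk4A /=; by rewrite ?add0r ?addr0.
Qed.

Definition qq (k : 'I_4) (y : state R 3) (t : R) : R :=
  if t == 1/2 then (if (val k == 2)%N then g else 0) else g.
Definition uu : state R 3 := fun k => if (val k == 0)%N then 1 else 0.

Definition t0 : R := 0 + 0%:R * 1.
Definition y2 : state R 3 := fun k => uu k + 1/2 * incr qq 1 1 uu (t0 + node (@rk4A R) 0 * 1) k.
Definition y3 : state R 3 := fun k => uu k + 1/2 * incr qq 1 1 y2 (t0 + node (@rk4A R) 1 * 1) k.
Definition y4 : state R 3 := fun k => uu k + 1 * incr qq 1 1 y3 (t0 + node (@rk4A R) 2 * 1) k.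

Lemma stagesS q dt dx tn (u : state R 3) i :
  stages (@rk4A R) q dt dx tn u i.+1 =
  rcons (stages (@rk4A R) q dt dx tn u i)
   (fun k => u k + \sum_(j < i) rk4A R i j *
                 incr q dt dx (nth u (stages (@rk4A R) q dt dx tn u i) j) (tn + node (@rk4A R) j * dt) k).
Proof. by []. Qed.

Lemma st4 : stages (@rk4A R) qq 1 1 t0 uu 4 = [:: uu; y2; y3; y4].
Proof.
have e1 : stages (@rk4A R) qq 1 1 t0 uu 1 = [:: uu].
  rewrite stagesS /=; congr [:: _]; apply: functional_extensionality => k.
  by rewrite big_ord0 addr0.
have e2 : stages (@rk4A R) qq 1 1 t0 uu 2 = [:: uu; y2].
  rewrite stagesS e1 /=; congr [:: _; _]; apply: functional_extensionality => k.
  by rewrite big_ord_recr big_ord0 /= add0r.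
have e3 : stages (@rk4A R) qq 1 1 t0 uu 3 = [:: uu; y2; y3].
  rewrite stagesS e2 /=; congr [:: _; _; _]; apply: functional_extensionality => k.
  by rewrite !big_ord_recr big_ord0 /= mul0r !add0r.
rewrite stagesS e3 /=; congr [:: _; _; _; _]; apply: functional_extensionality => k.
by rewrite !big_ord_recr big_ord0 /= !mul0r !add0r.
Qed.

Lemma stepE k : rk_step (@rk4A R) (@rk4b R) 4 qq 1 1 t0 uu k =
  uu k + \sum_(j < 4) rk4b R j * incr qq 1 1 (nth uu [:: uu; y2; y3; y4] j) (t0 + node (@rk4A R) j * 1) k.
Proof. by rewrite /rk_step st4. Qed.


Lemma half_neq0 : (1/2 : R) != 0.
Proof. by rewrite mul1r invr_eq0 pnatr_eq0. Qed.
Lemma half_neq1 : (1/2 : R) != 1.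
Proof. rewrite mul1r; apply/eqP => h. have : (2:R)^-1 * 2 = 1 * 2 by rewrite h. 
rewrite mulVf ?pnatr_eq0 // mul1r => /eqP. by rewrite eq_sym -subr_eq0 -[X in X - _]/(1+1) addrK oner_eq0. Qed.

Lemma t0E : t0 = 0.
Proof. by rewrite /t0 mulr0n mul0r addr0. Qed.

Lemma qA k y : qq k y (t0 + node (@rk4A R) 0 * 1) = g.
Proof. have [n0 _ _ _] := nodes. by rewrite /qq t0E n0 mul0r addr0 eq_sym (negbTE half_neq0). Qed.
Lemma qB k y : qq k y (t0 + node (@rk4A R) 1 * 1) = if (val k == 2)%N then g else 0.
Proof. have [_ n1 _ _] := nodes. by rewrite /qq t0E n1 add0r mulr1 eqxx. Qed.
Lemma qC k y : qq k y (t0 + node (@rk4A R) 2 * 1) = if (val k == 2)%N then g else 0.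
Proof. have [_ _ n2 _] := nodes. by rewrite /qq t0E n2 add0r mulr1 eqxx. Qed.
Lemma qD k y : qq k y (t0 + node (@rk4A R) 3 * 1) = g.
Proof. have [_ _ _ n3] := nodes. by rewrite /qq t0E n3 add0r mulr1 eq_sym (negbTE half_neq1). Qed.

Lemma prevI_val (k : 'I_4) : val (prevI k) = ((val k + 3) %% 4)%N.
Proof. by rewrite /prevI /= inordK // ltn_mod. Qed.

Lemma uuE k : uu k = if (val k == 0)%N then 1 else 0.
Proof. by []. Qed.

Lemma y2E k : y2 k = if (val k == 0)%N then 1 - g/2 else if (val k == 1)%N then g/2 else 0.
Proof.
rewrite /y2 /incr qA !uuE prevI_val divr1 mul1r.
case: k => [[|[|[|[|?]]]] ?] //=; rewrite ?subrr ?mulr0 ?addr0 ?add0r ?subr0 ?mulr1 ?sub0r ?mulrN1.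
all: ring.
Qed.

Lemma y3E k : y3 k = if (val k == 0)%N then 1 else if (val k == 2)%N then g*g/4 else 0.
Proof.
rewrite /y3 /incr qB !y2E !uuE prevI_val divr1 mul1r.
case: k => [[|[|[|[|?]]]] ?] //=; rewrite ?subrr ?mulr0 ?addr0 ?add0r ?subr0 ?mulr1 ?sub0r ?mulrN1 ?mul0r.
all: try ring.
by field.
Qed.

Lemma y4E k : y4 k = if (val k == 0)%N then 1 else if (val k == 2)%N then - (g*g*g/4) else 0.
Proof.
rewrite /y4 /incr qC !y3E !uuE prevI_val divr1 mul1r.
case: k => [[|[|[|[|?]]]] ?] //=; rewrite ?subrr ?mulr0 ?addr0 ?add0r ?subr0 ?mulr1 ?sub0r ?mulrN1 ?mul0r.
all: ring.
Qed.

Lemma neg : 0 < g ->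
  rk_sol (@rk4A R) (@rk4b R) 4 qq 1 1 0 uu 1 (@Ordinal 4 3 isT) < 0.
Proof.
move=> g0.
have -> : rk_sol (@rk4A R) (@rk4b R) 4 qq 1 1 0 uu 1 (@Ordinal 4 3 isT) = rk_step (@rk4A R) (@rk4b R) 4 qq 1 1 t0 uu (@Ordinal 4 3 isT) by [].
rewrite stepE !big_ord_recr big_ord0 /=.
rewrite /incr qA qB qC qD /= !uuE !y2E !y4E !y3E !prevI_val.
have v3 : \val (@Ordinal 4 3 isT) = 3%N by [].
rewrite !v3 /=.
have h : 0 < g*g*g*g by rewrite !mulr_gt0.
lra.
Qed.
End S.

Theorem proposition8 (R : realType) (gamma : R) :
  0 < gamma ->
  exists (N : nat) (dx dt t0 : R)
         (q : 'I_N.+1 -> state R N -> R -> R) (u0 : state R N),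
    (0 < dx /\ 0 < dt) /\
    [/\
        (forall k u t, 0 <= q k u t),
        (forall k u t, 0 <= dt * q k u t / dx <= gamma),
        (forall k, 0 <= u0 k) &
        (exists (n : nat) (k : 'I_N.+1),
          rk_sol (@rk4A R) (@rk4b R) 4 q dt dx t0 u0 n k < 0)].
Proof.
move=> g0.
exists 3%N, 1, 1, 0, (@qq R gamma), (uu R).
split; first by split; exact: ltr01.
split.
- move=> k u t; rewrite /qq; case: ifP => _; last exact: ltW.
  by case: ifP => _ //; exact: ltW.
- move=> k u t; rewrite mul1r divr1 /qq; case: ifP => _; last by rewrite ltW //=.
  by case: ifP => _; rewrite ?lexx ?ltW.
- by move=> k; rewrite /uu; case: ifP => _ //; exact: ler01.
- exists 1%N, (@Ordinal 4 3 isT); exact: neg.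
Qed.
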